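(* Let $p:\mathbb{R}^n\to\mathbb{R}$ be a nonzero polynomial of the form $$p(x)=\sum_{l\le |\alpha|\le k} c_\alpha x^\alpha,$$ where $l\ge 1$ is the lowest degree and $k\ge l$ the highest degree of $p$, i.e., $l$ (resp. $k$) is the smallest (resp. largest) integer such that some $\alpha\in\mathbb{N}^n$ with $|\alpha|=l$ (resp. $|\alpha|=k$) has $c_\alpha\neq 0$. Assume that $p(x)\le 0$ for all $x\in\mathbb{R}^n$. Then: \begin{enumerate} \item The degrees $l$ and $k$ are even, and both $p_l(x)=\sum_{|\alpha|=l}c_\alpha x^\alpha$ and $p_k(x)=\sum_{|\alpha|=k}c_\alpha x^\alpha$ are negative semi-definite. \item If a monomial $c_\alpha x^\alpha$ (with $c_\alpha\ne 0$) of $p$ contains a factor $x_i^{\alpha_i}$ whose degree $\alpha_i$ is the highest exponent of $x_i$ among all monomials of $p$, then $\alpha_i$ is even. \item If a monomial $x^\alpha$ appearing in $p_l$ (resp. $p_k$) contains a factor $x_i^{\alpha_i}$ whose degree $\alpha_i$ is the highest exponent of $x_i$ among all monomials of $p_l$ (resp. $p_k$), then $\alpha_i$ is even. \item If a monomial of $p$ has the form $c\,x_i^d$ (a single variable $x_i$ with coefficient $c$) and $d$ is either the lowest or the highest degree among the monomials of $p$ of this form (pure powers of $x_i$), then $d$ is even and $c\le 0$. \end{enumerate}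
   Context: Multi-index notation: for $\alpha=(\alpha_1,\dots,\alpha_n)\in\mathbb{N}^n$ (nonnegative integers), $x^\alpha=x_1^{\alpha_1}\cdots x_n^{\alpha_n}$ and $|\alpha|=\alpha_1+\dots+\alpha_n$. A monomial of $p$ means a term $c_\alpha x^\alpha$ with $c_\alpha\neq 0$. A function $V:\mathbb{R}^n\to\mathbb{R}$ is positive semi-definite if $V(0)=0$ and $V(x)\ge 0$ for all $x$; it is negative semi-definite if $-V$ is positive semi-definite. *)

(* Defs.v *)
From HB Require Import structures.
From mathcomp Require Import all_boot all_order all_algebra.
From mathcomp Require Import reals.
From mathcomp Require Import mpoly.
Set Implicit Arguments. Unset Strict Implicit. Unset Printing Implicit Defensive.
Import Order.TTheory GRing.Theory Num.Theory.
Local Open Scope ring_scope.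

Definition hpart (R : realType) (n d : nat) (p : {mpoly R[n]}) : {mpoly R[n]} :=
  \sum_(m <- msupp p | mdeg m == d) p@_m *: 'X_[m].

Definition neg_semidef (R : realType) (n : nat) (V : ('I_n -> R) -> R) : Prop :=
  V (fun _ => 0) = 0 /\ forall x, V x <= 0.

Definition pure_power (n : nat) (i : 'I_n) (m : 'X_{1..n}) : Prop :=
  forall j : 'I_n, j != i -> m j = 0%N.

Definition max_exponent (R : realType) (n : nat) (q : {mpoly R[n]}) (i : 'I_n)
  (m : 'X_{1..n}) : Prop :=
  forall m' : 'X_{1..n}, m' \in msupp q -> (m' i <= m i)%N.

(* Main.v *)
Require Import Defs.
From HB Require Import structures.
From mathcomp Require Import all_boot all_order all_algebra.
From mathcomp Require Import reals.
From mathcomp Require Import mpoly.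
From mathcomp Require Import lra zify.
From Stdlib Require Import Classical_Prop.
Import Order.TTheory GRing.Theory Num.Theory.
Local Open Scope ring_scope.



Section Uni.
Variable R : realType.

Lemma horner_bound (T : {poly R}) (t : R) : `|t| <= 1 ->
  `|T.[t]| <= \sum_(i < size T) `|T`_i|.
Proof.
move=> ht; rewrite horner_coef.
apply: le_trans (ler_norm_sum _ _ _) _.
apply: ler_sum => i _; rewrite normrM normrX.
have h1 : `|t| ^+ i <= 1 by apply: exprn_ile1.
have h2 : 0 <= `|T`_i| by [].
have h3 : 0 <= `|t| ^+ i by apply: exprn_ge0.
nra.
Qed.

Lemma bottom_lem (Q : {poly R}) (j : nat) :
  (forall t, t != 0 -> Q.[t] <= 0) -> (forall d, (d < j)%N -> Q`_d = 0) ->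
  Q`_j != 0 -> Q`_j < 0 /\ ~~ odd j.
Proof.
move=> HQ Hlow Hj.
set S := drop_poly j Q.
have QE t : Q.[t] = t ^+ j * S.[t].
  have := poly_take_drop j Q.
  have -> : take_poly j Q = 0.
    apply/polyP => i; rewrite coef_take_poly coef0.
    by case: ifP => // /Hlow.
  rewrite add0r => E; by rewrite -{1}E hornerM hornerXn mulrC.
set T := drop_poly 1 S.
set c := Q`_j.
have SE t : S.[t] = c + t * T.[t].
  have := poly_take_drop 1 S.
  have -> : take_poly 1 S = c%:P.
    apply/polyP => i; rewrite coef_take_poly coefC.
    case: i => [|i] //=. by rewrite /S coef_drop_poly.
  move=> E; by rewrite -{1}E hornerD hornerC hornerM hornerXn expr1 mulrC.
set M := \sum_(i < size T) `|T`_i|.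
have M0 : 0 <= M by apply: sumr_ge0 => i _.
have c0 : 0 < `|c| by rewrite normr_gt0.
set t0 := `|c| / (`|c| + M + 1).
have den0 : 0 < `|c| + M + 1 by lra.
have t0pos : 0 < t0 by rewrite divr_gt0.
have t0le1 : t0 <= 1 by rewrite ler_pdivrMr // mul1r; lra.
have t0M : t0 * M < `|c|.
  rewrite /t0 mulrAC ltr_pdivrMr //.
  nra.
have key t : `|t| = t0 -> 0 < c * S.[t].
  move=> ht.
  have ht1 : `|t| <= 1 by rewrite ht.
  have hb := @horner_bound T t ht1.
  have hn : `|t * T.[t]| < `|c|.
    rewrite normrM ht.
    apply: le_lt_trans t0M.
    by rewrite ler_pM2l.
  have e1 := ler_norm (- (c * (t * T.[t]))).
  rewrite normrN in e1.
  rewrite normrM in e1.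
  have e2 : c * c = `|c| * `|c| by rewrite -normrM ger0_norm // -expr2 sqr_ge0.
  rewrite SE mulrDr.
  have e3 : 0 <= `|t * T.[t]| by [].
  nra.
have Ht0 : Q.[t0] <= 0 by apply: HQ; rewrite gt_eqF.
have Hmt0 : Q.[- t0] <= 0 by apply: HQ; rewrite oppr_eq0 gt_eqF.
have k1 := key t0 (gtr0_norm t0pos).
have k2 : 0 < c * S.[- t0] by apply: key; rewrite normrN gtr0_norm.
have pj : 0 < t0 ^+ j by apply: exprn_gt0.
have cneg : c < 0.
  rewrite ltNge; apply/negP => cp.
  have cp' : 0 < c by rewrite lt_def Hj.
  rewrite QE in Ht0.
  have : 0 < S.[t0] by rewrite -(pmulr_rgt0 _ cp').
  move=> h; have : 0 < t0 ^+ j * S.[t0] by rewrite mulr_gt0.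
  by rewrite ltNge Ht0.
split=> //; apply/negP => oj.
rewrite QE exprNn -signr_odd oj expr1 mulN1r mulNr in Hmt0.
have : S.[- t0] < 0.
  by rewrite ltNge; apply/negP => h; move: k2; rewrite ltNge mulr_le0_ge0 // ltW.
move=> h; have : t0 ^+ j * S.[- t0] < 0 by rewrite pmulr_rlt0.
by rewrite ltNge -oppr_le0 Hmt0.
Qed.
End Uni.
Arguments bottom_lem {R Q j}.



Section Uni2.
Variable R : realType.

Lemma top_lem (Q : {poly R}) (D : nat) :
  (forall t, Q.[t] <= 0) -> (forall d, (D < d)%N -> Q`_d = 0) ->
  Q`_D != 0 -> Q`_D < 0 /\ ~~ odd D.
Proof.
move=> HQ Hhigh HD.
pose P : {poly R} := \sum_(i < D.+1) Q`_i *: 'X^(D + D - i).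
have coefP d : P`_d = \sum_(i < D.+1) Q`_i * (d == D + D - i)%N%:R.
  by rewrite coef_sum; apply: eq_bigr => i _; rewrite coefZ coefXn.
have PD : P`_D = Q`_D.
  rewrite coefP (bigD1 ord_max) //= addnK eqxx mulr1 big1 ?addr0 // => i hi.
  have : (i < D)%N.
    have := ltn_ord i; rewrite ltnS leq_eqVlt => /orP[/eqP e|//].
    by move: hi; rewrite -(inj_eq val_inj) /= e eqxx.
  move=> lt; have -> : (D == D + D - i)%N = false by apply/negbTE; lia.
  by rewrite mulr0.
have Plow d : (d < D)%N -> P`_d = 0.
  move=> lt; rewrite coefP big1 // => i _.
  have := ltn_ord i => li.
  have -> : (d == D + D - i)%N = false by apply/negbTE; lia.
  by rewrite mulr0.
have szQ : (size Q <= D.+1)%N by apply/leq_sizeP => j hj; apply: Hhigh.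
have Ph t : t != 0 -> P.[t] <= 0.
  move=> t0.
  have -> : P.[t] = t ^+ (D + D) * Q.[t^-1].
    rewrite (horner_coef_wide _ szQ) mulr_sumr horner_sum.
    apply: eq_bigr => i _; rewrite hornerZ hornerXn exprB ?unitfE //; last first.
      by have := ltn_ord i; lia.
    by rewrite exprVn mulrCA.
  have hp : 0 <= t ^+ (D + D) by rewrite exprD -expr2 sqr_ge0.
  by apply: mulr_ge0_le0.
have HD2 : P`_D != 0 by rewrite PD.
have := bottom_lem Ph Plow HD2; rewrite PD; exact.
Qed.

Lemma poly_id (Q : {poly R}) : (forall t, Q.[t] = 0) -> Q = 0.
Proof.
move=> HQ; case: (eqVneq Q 0) => // nz.
have ex : exists i, Q`_i != 0.
  by exists (size Q).-1; rewrite -lead_coefE lead_coef_eq0.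
case: (ex_minnP ex) => j hj hmin.
have low d : (d < j)%N -> Q`_d = 0.
  move=> lt; apply/eqP/negPn/negP => hd; have := hmin d hd; lia.
have h0 : forall t, t != 0 -> Q.[t] <= 0 by move=> t _; rewrite HQ.
have h1 := bottom_lem h0 low hj.
have h2 : (forall t, t != 0 -> (- Q).[t] <= 0).
  by move=> t _; rewrite hornerN HQ oppr0.
have low2 d : (d < j)%N -> (- Q)`_d = 0 by move=> lt; rewrite coefN low // oppr0.
have hj2 : (- Q)`_j != 0 by rewrite coefN oppr_eq0.
have := bottom_lem h2 low2 hj2; rewrite coefN; case: h1 => h1 _ [h3 _].
by rewrite oppr_lt0 in h3; move: (lt_trans h1 h3); rewrite ltxx.
Qed.
End Uni2.
Arguments top_lem {R Q D}. Arguments poly_id {R Q}.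



Section Multi.
Variables (R : realType) (n : nat).
Implicit Types (q : {mpoly R[n]}) (x : 'I_n -> R).

Definition filt (P : pred 'X_{1..n}) q : {mpoly R[n]} :=
  \sum_(m <- msupp q | P m) q@_m *: 'X_[m].

Lemma sum_supp_delta q (m0 : 'X_{1..n}) :
  \sum_(m <- msupp q) q@_m * (m == m0)%:R = q@_m0.
Proof.
case: (boolP (m0 \in msupp q)) => h.
  rewrite (bigD1_seq m0) ?msupp_uniq //= eqxx mulr1 big1 ?addr0 // => m /negbTE ->.
  by rewrite mulr0.
rewrite big1_seq ?memN_msupp_eq0 // => m /andP[_ hm].
case: eqP => [e|_]; last by rewrite mulr0.
by move: hm; rewrite e (negbTE h).
Qed.

Lemma filtE P q m : (filt P q)@_m = if P m then q@_m else 0.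
Proof.
rewrite /filt raddf_sum /=.
case hP: (P m).
  rewrite -(sum_supp_delta q m) big_mkcond /=; apply: eq_bigr => m' _.
  rewrite mcoeffZ mcoeffX; case: (eqVneq m' m) => [->|ne]; first by rewrite hP.
  by rewrite mulr0; case: (P m').
rewrite big1 // => m' Pm'; rewrite mcoeffZ mcoeffX.
case: eqP => [e|_]; last by rewrite mulr0.
by rewrite e hP in Pm'.
Qed.

Lemma filt_ext P P' q : P =1 P' -> filt P q = filt P' q.
Proof. by move=> e; rewrite /filt; apply: eq_bigl. Qed.

Lemma meval_filt x P q :
  meval x (filt P q) = \sum_(m <- msupp q | P m) q@_m * \prod_i x i ^+ m i.
Proof.
rewrite /filt (big_morph _ (mevalD x) (meval0 x)).
by apply: eq_bigr => m _; rewrite mevalZ mevalX.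
Qed.

Definition wdeg (w : 'I_n -> nat) (m : 'X_{1..n}) := (\sum_i w i * m i)%N.

Definition U (w : 'I_n -> nat) x q : {poly R} :=
  \sum_(m <- msupp q) (q@_m * \prod_i x i ^+ m i) *: 'X^(wdeg w m).

Lemma U_horner w x q (t : R) : (U w x q).[t] = meval (fun i => t ^+ w i * x i) q.
Proof.
rewrite /U horner_sum mevalE; apply: eq_bigr => m _.
rewrite hornerZ hornerXn -mulrA; congr (_ * _).

under [RHS]eq_bigr => i _ do rewrite exprMn -exprM.
rewrite big_split /= prodrXr mulrC.
by [].

Qed.

Lemma U_coef w x q d : (U w x q)`_d = meval x (filt (fun m => wdeg w m == d) q).
Proof.
rewrite meval_filt /U coef_sum [RHS]big_mkcond /=; apply: eq_bigr => m _.
rewrite coefZ coefXn [(d == _)]eq_sym.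
by case: (wdeg w m == d); rewrite ?mulr1 ?mulr0.
Qed.

Lemma meval_const0 q : meval (fun _ => 0) q = q@_0.
Proof.
rewrite mevalE -(sum_supp_delta q 0); apply: eq_bigr => m _; congr (_ * _).
case: (eqVneq m 0%MM) => [->|ne].
  by rewrite big1 // => i _; rewrite mnm0E expr0.
have [i hi] : exists i, m i != 0%N.
  case: (pickP (fun i => m i != 0%N)) => [i hi|h]; first by exists i.
  by move: ne; rewrite (_ : m = 0%MM) ?eqxx //; apply/mnmP => i; rewrite mnm0E; move: (h i) => /negbFE /eqP.
by rewrite (bigD1 i) //= expr0n (negbTE hi) mul0r.
Qed.

Definition ej (j : 'I_n) : 'I_n -> nat := fun i => nat_of_bool (i == j).

Lemma wdeg_e j m : wdeg (ej j) m = m j.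
Proof.
rewrite /wdeg (bigD1 j) //= /ej eqxx mul1n big1 ?addn0 // => i /negbTE ->.
by rewrite mul0n.
Qed.

Lemma wdeg_1 m : wdeg (fun _ => 1%N) m = mdeg m.
Proof. by rewrite /wdeg mdegE; apply: eq_bigr => i _; rewrite mul1n. Qed.

Lemma poly_nz q : q != 0 -> exists x, meval x q != 0.
Proof.
move=> nz; apply: NNPP => H.
have H0 x : meval x q = 0 by apply/eqP/negPn/negP => h; apply: H; exists x.
move/eqP: nz; apply; apply/mpolyP => m; rewrite mcoeff0.
pose G s := filt (fun m' => all (fun j => m' j == m j) s) q.
have HG s x : meval x (G s) = 0.
  elim: s x => [|j s IH] x.
    rewrite (_ : G [::] = q) ?H0 //; apply/mpolyP => m'; by rewrite filtE.
  have -> : G (j :: s) = filt (fun m' => wdeg (ej j) m' == m j) (G s).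
    apply/mpolyP => m'; rewrite !filtE wdeg_e /=.
    by case: (m' j == m j).
  rewrite -U_coef.
  rewrite (_ : U (ej j) x (G s) = 0) ?coef0 //.
  by apply: poly_id => t; rewrite U_horner IH.
have := HG (enum 'I_n) (fun _ => 1).
have -> : G (enum 'I_n) = q@_m *: 'X_[m].
  apply/mpolyP => m'; rewrite filtE mcoeffZ mcoeffX.
  case: ifP => [/allP ha|hna].
    have -> : m' = m by apply/mnmP => i; apply/eqP; apply: ha; rewrite mem_enum.
    by rewrite eqxx mulr1.
  case: (eqVneq m m') => [e|]; last by rewrite mulr0.
  by move: hna; rewrite e; move/negbT/negP; case; apply/allP => i _.
rewrite mevalZ mevalX big1 ?mulr1 // => i _; exact: expr1n.
Qed.

End Multi.
Arguments filt {R n}. Arguments sum_supp_delta {R n}. Arguments filtE {R n}.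
Arguments filt_ext {R n}. Arguments meval_filt {R n}. Arguments wdeg {n}.
Arguments U {R n}. Arguments U_horner {R n}. Arguments U_coef {R n}.
Arguments meval_const0 {R n}. Arguments ej {n}. Arguments wdeg_e {n}.
Arguments wdeg_1 {n}. Arguments poly_nz {R n q}.



Lemma maxexp_even (R : realType) (n : nat) (q : {mpoly R[n]}) :
  (forall x, meval x q <= 0) ->
  forall m i, m \in msupp q -> max_exponent q i m -> ~~ odd (m i).
Proof.
move=> Hq m i hm hmax.
set F := filt (fun m' => wdeg (ej i) m' == m i) q.
have Fnz : F != 0.
  apply/eqP => e; have := filtE (fun m' => wdeg (ej i) m' == m i) q m.
  rewrite -/F e mcoeff0 wdeg_e eqxx => e0.
  by move: hm; rewrite mcoeff_msupp -e0 eqxx.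
have [x hx] := poly_nz Fnz.
pose Q := U (ej i) x q.
have HQ t : Q.[t] <= 0 by rewrite U_horner.
have Hh d : (m i < d)%N -> Q`_d = 0.
  move=> lt; rewrite U_coef (_ : filt _ q = 0) ?meval0 //.
  rewrite /filt big1_seq // => m' /andP[/eqP e hm']; exfalso.
  rewrite wdeg_e in e; have := hmax m' hm'; lia.
have HD : Q`_(m i) != 0 by rewrite U_coef.
by case: (top_lem HQ Hh HD).
Qed.

Definition pureb (n : nat) (i : 'I_n) (m : 'X_{1..n}) :=
  [forall j, (j != i) ==> (m j == 0%N)].

Arguments pureb {n}.

Lemma pureP (n : nat) (i : 'I_n) (m : 'X_{1..n}) : reflect (pure_power i m) (pureb i m).
Proof.
apply: (iffP forallP) => h j.
  by move=> ne; apply/eqP; exact: (implyP (h j)).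
by apply/implyP => ne; apply/eqP/h.
Qed.

Theorem proposition1 (R : realType) (n : nat) (p : {mpoly R[n]}) (l k : nat) :
  p != 0 ->
  (1 <= l)%N ->
  (* l is the lowest and k the highest degree of p *)
  (exists2 m, m \in msupp p & mdeg m = l) ->
  (exists2 m, m \in msupp p & mdeg m = k) ->
  (forall m, m \in msupp p -> (l <= mdeg m <= k)%N) ->
  (* p(x) <= 0 for all x in R^n *)
  (forall x : 'I_n -> R, meval x p <= 0) ->
  [/\ (* 1. *)
      [/\ ~~ odd l, ~~ odd k,
          neg_semidef (fun x => meval x (hpart l p)) &
          neg_semidef (fun x => meval x (hpart k p))],
      (* 2. *)
      (forall (m : 'X_{1..n}) (i : 'I_n),
          m \in msupp p -> max_exponent p i m -> ~~ odd (m i)),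
      (* 3. *)
      (forall (m : 'X_{1..n}) (i : 'I_n),
          m \in msupp (hpart l p) -> max_exponent (hpart l p) i m -> ~~ odd (m i)) /\
      (forall (m : 'X_{1..n}) (i : 'I_n),
          m \in msupp (hpart k p) -> max_exponent (hpart k p) i m -> ~~ odd (m i)) &
      (* 4. *)
      (forall (m : 'X_{1..n}) (i : 'I_n),
          m \in msupp p -> pure_power i m ->
          ((forall m', m' \in msupp p -> pure_power i m' -> (m i <= m' i)%N) \/
           (forall m', m' \in msupp p -> pure_power i m' -> (m' i <= m i)%N)) ->
          ~~ odd (m i) /\ p@_m <= 0)].
Proof.
move=> pnz l1 [ml hml eml] [mk hmk emk] hdeg Hp.
have lk : (l <= k)%N by case/andP: (hdeg mk hmk); rewrite emk.
pose ones := fun _ : 'I_n => 1%N.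
have hcoef x d : (U ones x p)`_d = meval x (hpart d p).
  rewrite U_coef; congr (meval x _).
  change (filt (fun m => wdeg ones m == d) p = filt (fun m => mdeg m == d) p).
  by apply: filt_ext => m /=; rewrite wdeg_1.
have HQ x t : (U ones x p).[t] <= 0 by rewrite U_horner.
have HQ' x t : t != 0 -> (U ones x p).[t] <= 0 by move=> _; apply: HQ.
have hpart0 d : (forall m, m \in msupp p -> mdeg m != d) -> hpart d p = 0.
  move=> h; rewrite /hpart big1_seq // => m /andP[e hm].
  by move: (h m hm); rewrite e.
have Hlow x d : (d < l)%N -> (U ones x p)`_d = 0.
  move=> lt; rewrite hcoef hpart0 ?meval0 // => m hm.
  case/andP: (hdeg m hm) => h1 h2; apply/eqP => e; lia.
have Hhigh x d : (k < d)%N -> (U ones x p)`_d = 0.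
  move=> lt; rewrite hcoef hpart0 ?meval0 // => m hm.
  case/andP: (hdeg m hm) => h1 h2; apply/eqP => e; lia.
have hpc d m : (hpart d p)@_m = if mdeg m == d then p@_m else 0.
  exact: (filtE (fun m => mdeg m == d) p m).
have nzl : hpart l p != 0.
  apply/eqP => e; move: (hpc l ml); rewrite e mcoeff0 eml eqxx => e0.
  by move: hml; rewrite mcoeff_msupp -e0 eqxx.
have nzk : hpart k p != 0.
  apply/eqP => e; move: (hpc k mk); rewrite e mcoeff0 emk eqxx => e0.
  by move: hmk; rewrite mcoeff_msupp -e0 eqxx.
have ev0 d : (1 <= d)%N -> meval (fun _ => 0) (hpart d p) = 0.
  move=> d1; rewrite meval_const0 hpc mdeg0.
  by case: eqP => // e; move: d1; rewrite -e.
have SDl : neg_semidef (fun x => meval x (hpart l p)).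
  split; first exact: ev0.
  move=> x; case: (eqVneq (meval x (hpart l p)) 0) => [->//|ne].
  have hn : (U ones x p)`_l != 0 by rewrite hcoef.
  by case: (bottom_lem (HQ' x) (Hlow x) hn) => h _; rewrite -hcoef ltW.
have SDk : neg_semidef (fun x => meval x (hpart k p)).
  split; first by apply: ev0; apply: leq_trans lk.
  move=> x; case: (eqVneq (meval x (hpart k p)) 0) => [->//|ne].
  have hn : (U ones x p)`_k != 0 by rewrite hcoef.
  by case: (top_lem (HQ x) (Hhigh x) hn) => h _; rewrite -hcoef ltW.
split.
- split=> //.
  + have [x hx] := poly_nz nzl.
    have hn : (U ones x p)`_l != 0 by rewrite hcoef.
    by case: (bottom_lem (HQ' x) (Hlow x) hn).
  + have [x hx] := poly_nz nzk.
    have hn : (U ones x p)`_k != 0 by rewrite hcoef.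
    by case: (top_lem (HQ x) (Hhigh x) hn).
- exact: maxexp_even.
- split; apply: maxexp_even; [exact: SDl.2 | exact: SDk.2].
move=> m i hm pm hext.
pose x : 'I_n -> R := fun j => (j == i)%:R.
pose Q := U (ej i) x p.
have HQi t : Q.[t] <= 0 by rewrite U_horner.
have HQi' t : t != 0 -> Q.[t] <= 0 by move=> _; apply: HQi.
have prodE (m' : 'X_{1..n}) : \prod_j x j ^+ m' j = if pureb i m' then 1 else 0.
  case: (boolP (pureb i m')) => [h|/forallPn [j hj]].
    apply: big1 => j _; rewrite /x; case: eqVneq => [_|ne]; first by rewrite expr1n.
    by have /implyP/(_ ne)/eqP -> := (forallP h) j; rewrite expr0.
  rewrite negb_imply in hj; case/andP: hj => ne nz.
  by rewrite (bigD1 j) //= /x (negbTE ne) expr0n (negbTE nz) mul0r.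
have coefQ d : Q`_d = \sum_(m' <- msupp p | (m' i == d) && pureb i m') p@_m'.
  rewrite /Q U_coef meval_filt big_mkcond [RHS]big_mkcond /=.
  apply: eq_bigr => m' _; rewrite wdeg_e prodE.
  by case: (m' i == d); case: (pureb i m'); rewrite /= ?mulr1 ?mulr0.
have Cm : Q`_(m i) = p@_m.
  rewrite coefQ -(sum_supp_delta p m) big_mkcond; apply: eq_bigr => m' _.
  case: (eqVneq m' m) => [->|ne].
    have pb : pureb i m by apply/pureP.
    by rewrite !eqxx pb mulr1.
  rewrite mulr0; case: ifP => // /andP[/eqP e /pureP pb]; exfalso.
  move/negP: ne; apply; apply/eqP/mnmP => j.
  case: (eqVneq j i) => [->//|nej]; by rewrite (pb j nej) (pm j nej).
have Cnz : Q`_(m i) != 0 by rewrite Cm -mcoeff_msupp.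
case: hext => [hlo|hhi].
  have low d : (d < m i)%N -> Q`_d = 0.
    move=> lt; rewrite coefQ big1_seq // => m' /andP[/andP[/eqP e /pureP pb] hm'].
    exfalso; have := hlo m' hm' pb; lia.
  have [h1 h2] := bottom_lem HQi' low Cnz; rewrite Cm in h1; split => //; exact: ltW.
have high d : (m i < d)%N -> Q`_d = 0.
  move=> lt; rewrite coefQ big1_seq // => m' /andP[/andP[/eqP e /pureP pb] hm'].
  exfalso; have := hhi m' hm' pb; lia.
have [h1 h2] := top_lem HQi high Cnz; rewrite Cm in h1; split => //; exact: ltW.
Qed.
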